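(* Fix $q_{\min}>0$ and let $\phi_t(n):=P^{\mathbb N_0}_t1_{\mathbb N_+}(n)$ for $n\in\mathbb N_0$, $t\ge 0$. Then: (a) for all $r\in\mathbb N_+$ and $t>0$, $\partial_t\phi_t(r)=2q_{\min}\big(\phi_t(r+1)+\phi_t(r-1)-2\phi_t(r)\big)\le 0$; (b) $\phi_t(y)\ge\phi_t(x)$ whenever $y\ge x$; (c) for all $r\in\mathbb N_+$ and $t>0$, $\phi_t(r)\le \dfrac{r}{2\sqrt{t\,q_{\min}}}$.
   Context: $\mathbb N_0=\{0,1,2,\dots\}$, $\mathbb N_+=\{1,2,\dots\}$. $G_{\mathbb N_0}=(\mathbb N_0,q_0)$ is the graph with $q_0(x,y)=2q_{\min}$ if $|x-y|=1$ and $x>0$, and $q_0(x,y)=0$ otherwise (a birth–death chain absorbed at $0$), with Laplacian $\Delta f(x)=\sum_y q_0(x,y)(f(y)-f(x))$. Its heat semigroup $P^{\mathbb N_0}_t$ on bounded functions is defined as follows: for finite $S$ let $q_S(x,y)=q_0(x,y)1_S(x)$ with Laplacian $\Delta_S$ and $P^S_tf=\sum_{k\ge0}t^k\Delta_S^k(f1_S)/k!$; then $P_tf=\lim_i P^{S_i}_tf$ pointwise along any increasing exhaustion of $\mathbb N_0$ by finite sets. *)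

(* Defs.v *)
From Stdlib Require Import Reals Lra Lia Arith ClassicalEpsilon.
Open Scope R_scope.

(* Limit of a real sequence (value chosen by epsilon; equals the unique limit
   whenever the sequence converges). *)
Definition Lim (u : nat -> R) : R :=
  epsilon (inhabits 0) (fun l => Un_cv u l).

Definition q0 (qmin : R) (x y : nat) : R :=
  if andb (0 <? x)%nat (orb (y =? S x)%nat (S y =? x)%nat) then 2 * qmin else 0.

Definition inS (N x : nat) : bool := (x <=? N)%nat.

(* Laplacian of q_S(x,y) = q0(x,y) 1_S(x):
   Delta_S g x = 1_S(x) * sum_y q0(x,y) (g y - g x);
   q0 x y = 0 for y > x+1, so the sum over y is the finite sum over y <= x+1. *)
Definition LapS (qmin : R) (N : nat) (g : nat -> R) (x : nat) : R :=
  if inS N x then sum_f_R0 (fun y => q0 qmin x y * (g y - g x)) (S x) else 0.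

Definition restrict (N : nat) (f : nat -> R) (x : nat) : R :=
  if inS N x then f x else 0.

Definition PS (qmin : R) (N : nat) (t : R) (f : nat -> R) (x : nat) : R :=
  Lim (fun n => sum_f_R0
         (fun k => t ^ k / INR (fact k) * Nat.iter k (LapS qmin N) (restrict N f) x) n).

(* Heat semigroup: pointwise limit along the exhaustion S_0 ⊂ S_1 ⊂ ... *)
Definition Pt (qmin : R) (t : R) (f : nat -> R) (x : nat) : R :=
  Lim (fun N => PS qmin N t f x).

Definition phi (qmin : R) (t : R) (n : nat) : R :=
  Pt qmin t (fun m => if (0 <? m)%nat then 1 else 0) n.

(* Main.v *)
Require Import Defs.
From Stdlib Require Import Reals Lra Lia Arith FunctionalExtensionality ClassicalEpsilon.
From Coquelicot Require Import Coquelicot.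
Open Scope R_scope.

Definition exs (y : R) (k : nat) : R := y ^ k / INR (fact k).

Lemma exs_ex (y : R) : ex_series (exs y).
Proof.
  pose proof (is_exp_Reals y) as H.
  exists (exp y). unfold is_pseries in H.
  eapply is_series_ext; [|exact H]. intro n. unfold exs.
  rewrite pow_n_pow. reflexivity.
Qed.

Definition ESa (c : nat -> R) (k : nat) : R := c k / INR (fact k).
Definition ES (c : nat -> R) (t : R) : R := PSeries (ESa c) t.
Definition cbnd (c : nat -> R) (M K : R) := forall k, Rabs (c k) <= M * K ^ k.

Lemma fact_pos k : 0 < INR (fact k).
Proof. apply lt_0_INR. apply lt_O_fact. Qed.

Lemma exs_ge0 y k : 0 <= y -> 0 <= exs y k.
Proof. intro. unfold exs. apply Rmult_le_pos. apply pow_le; auto.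
  left; apply Rinv_0_lt_compat, fact_pos. Qed.

Lemma ES_disk c M K r : 0 <= K -> 0 <= r -> cbnd c M K -> CV_disk (ESa c) r.
Proof.
  intros HK Hr Hc. unfold CV_disk.
  apply (@ex_series_le R_AbsRing R_CompleteNormedModule) with (b := fun n => M * exs (K * r) n).
  - intro n. unfold norm; simpl. unfold abs; simpl. rewrite Rabs_Rabsolu.
    unfold ESa, exs. rewrite Rabs_mult. rewrite Rpow_mult_distr.
    rewrite (Rabs_right (r ^ n)) by (apply Rle_ge, pow_le; auto).
    unfold Rdiv. rewrite Rabs_mult. rewrite (Rabs_right (/ INR (fact n))) by (left; apply Rinv_0_lt_compat, fact_pos).
    pose proof (Hc n). pose proof (pow_le r n Hr). pose proof (Rinv_0_lt_compat _ (fact_pos n)).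
    replace (M * (K ^ n * r ^ n * / INR (fact n))) with ((M * K ^ n) * / INR (fact n) * r ^ n) by ring.
    apply Rmult_le_compat_r; auto. apply Rmult_le_compat_r; lra.
  - apply (ex_series_scal_l M (exs (K * r))), exs_ex.
Qed.

Lemma ES_rad c M K t : 0 <= K -> cbnd c M K -> Rbar_lt (Rabs t) (CV_radius (ESa c)).
Proof.
  intros HK Hc. unfold CV_radius.
  destruct (Lub_Rbar_correct (CV_disk (ESa c))) as [Hub _].
  apply Rbar_lt_le_trans with (Rabs t + 1).
  - simpl; lra.
  - apply Hub. apply ES_disk with M K; auto. pose proof (Rabs_pos t); lra.
Qed.

Lemma ES_ex c M K t : 0 <= K -> cbnd c M K -> ex_pseries (ESa c) t.
Proof. intros. apply CV_radius_inside. eapply ES_rad; eauto. Qed.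

Lemma ES_is c M K t : 0 <= K -> cbnd c M K -> is_series (fun k => t ^ k / INR (fact k) * c k) (ES c t).
Proof.
  intros HK Hc. pose proof (ES_ex c M K t HK Hc) as H.
  pose proof (PSeries_correct _ _ H) as H2. unfold ES.
  eapply is_series_ext; [|exact H2]. intro n. simpl. rewrite pow_n_pow.
  change (scal (t ^ n) (ESa c n)) with (t ^ n * ESa c n). unfold ESa. field.
  apply Rgt_not_eq, fact_pos.
Qed.

Lemma ES_0 c : ES c 0 = c 0%nat.
Proof. unfold ES. rewrite PSeries_0. unfold ESa. simpl. field. Qed.

Lemma ES_derive c M K t : 0 <= K -> cbnd c M K -> is_derive (ES c) t (ES (fun k => c (S k)) t).
Proof.
  intros HK Hc. unfold ES.
  replace (PSeries (ESa (fun k => c (S k))) t) with (PSeries (PS_derive (ESa c)) t).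
  - apply is_derive_PSeries. eapply ES_rad; eauto.
  - apply PSeries_ext. intro n. unfold PS_derive, ESa. rewrite fact_simpl, mult_INR.
    field. split; [apply Rgt_not_eq, fact_pos| apply not_0_INR; lia].
Qed.

Lemma ES_lin c1 c2 a b M1 K1 M2 K2 t : 0 <= K1 -> 0 <= K2 -> cbnd c1 M1 K1 -> cbnd c2 M2 K2 ->
  ES (fun k => a * c1 k + b * c2 k) t = a * ES c1 t + b * ES c2 t.
Proof.
  intros. unfold ES.
  rewrite <- (PSeries_scal a), <- (PSeries_scal b).
  rewrite <- PSeries_plus.
  - apply PSeries_ext. intro n. unfold PS_plus, PS_scal, ESa. simpl.
    change (scal a (c1 n / INR (fact n))) with (a * (c1 n / INR (fact n))).
    change (scal b (c2 n / INR (fact n))) with (b * (c2 n / INR (fact n))).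
    change (plus (a * (c1 n / INR (fact n))) (b * (c2 n / INR (fact n)))) with
      ((a * (c1 n / INR (fact n))) + (b * (c2 n / INR (fact n)))). field.
    apply Rgt_not_eq, fact_pos.
  - apply ex_pseries_scal. apply Rmult_comm. apply (ES_ex c1 M1 K1); auto.
  - apply ex_pseries_scal. apply Rmult_comm. apply (ES_ex c2 M2 K2); auto.
Qed.

Lemma ES_ge0 c M K t : 0 <= K -> cbnd c M K -> 0 <= t -> (forall k, 0 <= c k) -> 0 <= ES c t.
Proof.
  intros HK Hc Ht Hp. pose proof (ES_is c M K t HK Hc) as H.
  apply is_series_unique in H. rewrite <- H.
  replace 0 with (Series (fun n => 0 * exs 0 n)) at 1 by (rewrite Series_scal_l; ring).
  apply Series_le.
  - intro n. split; [lra|]. rewrite Rmult_0_l. apply Rmult_le_pos; auto. unfold Rdiv. apply Rmult_le_pos. apply pow_le; auto.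
    left; apply Rinv_0_lt_compat, fact_pos.
  - exists (ES c t). apply (ES_is c M K t); auto.

Qed.

Definition tailf (m : nat) (y : R) (k : nat) : R := if (k <=? m)%nat then 0 else exs y k.
Definition tail (m : nat) (y : R) : R := Series (tailf m y).

Lemma tailf_ge0 m y k : 0 <= y -> 0 <= tailf m y k.
Proof. intro. unfold tailf. destruct (k <=? m)%nat. lra. apply exs_ge0; auto. Qed.

Lemma tail_ex m y : 0 <= y -> ex_series (tailf m y).
Proof.
  intro Hy. apply (@ex_series_le R_AbsRing R_CompleteNormedModule) with (b := exs y).
  - intro n. unfold norm; simpl. unfold abs; simpl. rewrite Rabs_right by (apply Rle_ge, tailf_ge0; auto).
    unfold tailf. destruct (n <=? m)%nat. apply exs_ge0; auto. lra.
  - apply exs_ex.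
Qed.

Lemma tail_mono m y1 y2 : 0 <= y1 <= y2 -> tail m y1 <= tail m y2.
Proof.
  intros [H1 H2]. unfold tail. apply Series_le.
  - intro n. split. apply tailf_ge0; auto. unfold tailf. destruct (n <=? m)%nat. lra.
    unfold exs, Rdiv. apply Rmult_le_compat_r. left; apply Rinv_0_lt_compat, fact_pos.
    apply pow_incr; auto.
  - apply tail_ex; lra.
Qed.

Lemma tail_eq m y : 0 <= y -> tail m y = Series (exs y) - sum_f_R0 (exs y) m.
Proof.
  intro Hy. unfold tail.
  rewrite (Series_incr_n (tailf m y) (S m)) by (try lia; apply tail_ex; auto).
  rewrite (Series_incr_n (exs y) (S m)) by (try lia; apply exs_ex).
  simpl pred.
  assert (H0 : sum_f_R0 (tailf m y) m = 0).
  { assert (forall j, (j <= m)%nat -> sum_f_R0 (tailf m y) j = 0).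
    { induction j; intro Hj; simpl.
      - unfold tailf. destruct (0 <=? m)%nat eqn:E. auto. apply Nat.leb_nle in E; lia.
      - rewrite IHj by lia. unfold tailf. destruct (S j <=? m)%nat eqn:E. lra. apply Nat.leb_nle in E; lia. }
    apply H; lia. }
  rewrite H0.
  assert (Series (fun k => tailf m y (S m + k)) = Series (fun k => exs y (S m + k))).
  { apply Series_ext. intro n. unfold tailf. destruct (S m + n <=? m)%nat eqn:E; auto.
    apply Nat.leb_le in E; lia. }
  rewrite H. ring.
Qed.

Lemma tail_cv y : 0 <= y -> Un_cv (fun m => tail m y) 0.
Proof.
  intro Hy. pose proof (Series_correct _ (exs_ex y)) as H.
  apply is_series_Reals in H.
  intros eps Heps. destruct (H eps Heps) as [N HN]. exists N. intros n Hn.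
  specialize (HN n Hn). rewrite tail_eq by auto. unfold Rdist in *.
  unfold R_dist. rewrite Rminus_0_r. rewrite Rabs_minus_sym in HN. exact HN.
Qed.

Lemma ES_tail c m M K t : 0 <= M -> 0 <= K -> (forall k, (k <= m)%nat -> c k = 0) ->
  cbnd c M K -> Rabs (ES c t) <= M * tail m (K * Rabs t).
Proof.
  intros HM HK H0 Hc.
  pose proof (ES_is c M K t HK Hc) as H. apply is_series_unique in H. rewrite <- H.
  assert (Hb : forall n, Rabs (t ^ n / INR (fact n) * c n) <= M * tailf m (K * Rabs t) n).
  { intro n. unfold tailf. destruct (n <=? m)%nat eqn:E.
    - apply Nat.leb_le in E. rewrite H0 by auto. rewrite Rmult_0_r, Rabs_R0. lra.
    - unfold exs. rewrite Rabs_mult. unfold Rdiv. rewrite Rabs_mult, <- RPow_abs.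
      rewrite (Rabs_right (/ INR (fact n))) by (left; apply Rinv_0_lt_compat, fact_pos).
      rewrite Rpow_mult_distr. specialize (Hc n).
      pose proof (pow_le (Rabs t) n (Rabs_pos t)). pose proof (Rinv_0_lt_compat _ (fact_pos n)).
      replace (M * (K ^ n * Rabs t ^ n * / INR (fact n))) with (Rabs t ^ n * / INR (fact n) * (M * K ^ n)) by ring.
      apply Rmult_le_compat_l; auto. apply Rmult_le_pos; lra. }
  assert (Hex : ex_series (fun n => M * tailf m (K * Rabs t) n)).
  { apply (ex_series_scal_l M (tailf m (K * Rabs t))). apply tail_ex.
    apply Rmult_le_pos; auto; apply Rabs_pos. }
  eapply Rle_trans. apply Series_Rabs.
  - apply (@ex_series_le R_AbsRing R_CompleteNormedModule) with (b := fun n => M * tailf m (K * Rabs t) n); auto.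
    intro n. unfold norm; simpl. unfold abs; simpl. rewrite Rabs_Rabsolu. auto.
  - unfold tail. rewrite <- Series_scal_l. apply Series_le; auto.
    intro n. split; auto. apply Rabs_pos.
Qed.

Definition Op (al be ga : nat -> R) (g : nat -> R) (x : nat) : R :=
  al x * g (S x) + be x * g (pred x) + ga x * g x.
Definition It (al be ga : nat -> R) (k : nat) (g : nat -> R) : nat -> R := Nat.iter k (Op al be ga) g.
Definition good (al be ga : nat -> R) (B : R) :=
  0 <= B /\ forall x, 0 <= al x <= B /\ 0 <= be x <= B /\ - B <= ga x <= B.

Lemma Op_ext al be ga h1 h2 x : (forall y, h1 y = h2 y) -> Op al be ga h1 x = Op al be ga h2 x.
Proof. intro H. unfold Op. rewrite !H. reflexivity. Qed.

Lemma It_S al be ga k g x : It al be ga (S k) g x = Op al be ga (It al be ga k g) x.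
Proof. reflexivity. Qed.

Lemma It_lin al be ga k g1 g2 a b x :
  It al be ga k (fun y => a * g1 y + b * g2 y) x = a * It al be ga k g1 x + b * It al be ga k g2 x.
Proof.
  revert x; induction k; intro x. reflexivity.
  rewrite !It_S. rewrite (Op_ext _ _ _ _ (fun y => a * It al be ga k g1 y + b * It al be ga k g2 y)) by auto.
  unfold Op. ring.
Qed.

Lemma It_bnd al be ga B g M k x : good al be ga B -> (forall y, Rabs (g y) <= M) ->
  Rabs (It al be ga k g x) <= M * (3 * B) ^ k.
Proof.
  intros [HB Hg] HM. revert x; induction k; intro x.
  - simpl. rewrite Rmult_1_r. apply HM.
  - rewrite It_S. unfold Op. destruct (Hg x) as (H1 & H2 & H3).
    pose proof (IHk (S x)); pose proof (IHk (pred x)); pose proof (IHk x).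
    assert (Hp : 0 <= M * (3 * B) ^ k) by (eapply Rle_trans; [apply Rabs_pos|apply (IHk x)]).
    simpl pow.
    eapply Rle_trans. apply Rabs_triang. eapply Rle_trans. apply Rplus_le_compat_r. apply Rabs_triang.
    rewrite !Rabs_mult.
    assert (Rabs (al x) <= B) by (rewrite Rabs_right; lra).
    assert (Rabs (be x) <= B) by (rewrite Rabs_right; lra).
    assert (Rabs (ga x) <= B) by (apply Rabs_le; lra).
    assert (Rabs (al x) * Rabs (It al be ga k g (S x)) <= B * (M * (3 * B) ^ k))
      by (apply Rmult_le_compat; auto; apply Rabs_pos).
    assert (Rabs (be x) * Rabs (It al be ga k g (pred x)) <= B * (M * (3 * B) ^ k))
      by (apply Rmult_le_compat; auto; apply Rabs_pos).
    assert (Rabs (ga x) * Rabs (It al be ga k g x) <= B * (M * (3 * B) ^ k))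
      by (apply Rmult_le_compat; auto; apply Rabs_pos).
    lra.
Qed.

Definition Sg (al be ga : nat -> R) (g : nat -> R) (t : R) (x : nat) : R :=
  ES (fun k => It al be ga k g x) t.

Lemma It_cbnd al be ga B g M x : good al be ga B -> (forall y, Rabs (g y) <= M) ->
  cbnd (fun k => It al be ga k g x) M (3 * B).
Proof. intros. intro k. apply It_bnd; auto. Qed.

Lemma good_K al be ga B : good al be ga B -> 0 <= 3 * B.
Proof. intros [H _]. lra. Qed.

Lemma Sg_lin al be ga B g1 g2 M1 M2 a b t x : good al be ga B ->
  (forall y, Rabs (g1 y) <= M1) -> (forall y, Rabs (g2 y) <= M2) ->
  Sg al be ga (fun y => a * g1 y + b * g2 y) t x = a * Sg al be ga g1 t x + b * Sg al be ga g2 t x.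
Proof.
  intros Hg H1 H2. unfold Sg. pose proof (good_K _ _ _ _ Hg) as HK.
  rewrite <- (ES_lin _ _ a b M1 (3*B) M2 (3*B) t HK HK (It_cbnd _ _ _ _ _ _ x Hg H1) (It_cbnd _ _ _ _ _ _ x Hg H2)).
  unfold ES. apply PSeries_ext. intro n. unfold ESa. rewrite It_lin. reflexivity.
Qed.

Lemma Sg_derive al be ga B g M t x : good al be ga B -> (forall y, Rabs (g y) <= M) ->
  is_derive (fun s => Sg al be ga g s x) t (Op al be ga (fun y => Sg al be ga g t y) x).
Proof.
  intros Hg HM. unfold Sg. pose proof (good_K _ _ _ _ Hg) as HK.
  pose proof (ES_derive (fun k => It al be ga k g x) M (3*B) t HK (It_cbnd _ _ _ _ _ _ x Hg HM)) as H.
  replace (Op al be ga (fun y => ES (fun k => It al be ga k g y) t) x) with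
    (ES (fun k => It al be ga (S k) g x) t); auto.
  unfold Op.
  rewrite <- (ES_lin _ _ (al x) (be x) M (3*B) M (3*B) t HK HK (It_cbnd _ _ _ _ _ _ (S x) Hg HM) (It_cbnd _ _ _ _ _ _ (pred x) Hg HM)).
  assert (Hc : cbnd (fun k => al x * It al be ga k g (S x) + be x * It al be ga k g (pred x)) (2 * B * M) (3 * B)).
  { destruct Hg as [HB Hg]. destruct (Hg x) as (A1 & A2 & A3). intro k.
    pose proof (It_bnd _ _ _ _ _ _ k (S x) (conj HB Hg) HM). pose proof (It_bnd _ _ _ _ _ _ k (pred x) (conj HB Hg) HM).
    eapply Rle_trans. apply Rabs_triang. rewrite !Rabs_mult.
    rewrite (Rabs_right (al x)), (Rabs_right (be x)) by lra.
    assert (al x * Rabs (It al be ga k g (S x)) <= B * (M * (3 * B) ^ k)) by (apply Rmult_le_compat; try lra; apply Rabs_pos).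
    assert (be x * Rabs (It al be ga k g (pred x)) <= B * (M * (3 * B) ^ k)) by (apply Rmult_le_compat; try lra; apply Rabs_pos).
    lra. }
  transitivity (ES (fun k => 1 * (al x * It al be ga k g (S x) + be x * It al be ga k g (pred x)) + ga x * It al be ga k g x) t).
  - unfold ES. apply PSeries_ext. intro n. unfold ESa. rewrite It_S. unfold Op. field.
    apply Rgt_not_eq, fact_pos.
  - rewrite (ES_lin _ _ 1 (ga x) (2*B*M) (3*B) M (3*B) t HK HK Hc (It_cbnd _ _ _ _ _ _ x Hg HM)). ring.
Qed.

Lemma It_inter al1 be1 ga1 al2 be2 ga2 a b :
  (forall h r, Op al2 be2 ga2 (fun y => a * h y + b * h (S y)) r = a * Op al1 be1 ga1 h r + b * Op al1 be1 ga1 h (S r)) ->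
  forall k h r, It al2 be2 ga2 k (fun y => a * h y + b * h (S y)) r = a * It al1 be1 ga1 k h r + b * It al1 be1 ga1 k h (S r).
Proof.
  intros HI k h. induction k; intro r. reflexivity.
  rewrite !It_S. rewrite (Op_ext _ _ _ _ (fun y => a * It al1 be1 ga1 k h y + b * It al1 be1 ga1 k h (S y))) by auto.
  apply HI.
Qed.

Lemma Sg_inter al1 be1 ga1 al2 be2 ga2 a b B1 B2 h M t r :
  good al1 be1 ga1 B1 -> good al2 be2 ga2 B2 -> (forall y, Rabs (h y) <= M) ->
  (forall h r, Op al2 be2 ga2 (fun y => a * h y + b * h (S y)) r = a * Op al1 be1 ga1 h r + b * Op al1 be1 ga1 h (S r)) ->
  Sg al2 be2 ga2 (fun y => a * h y + b * h (S y)) t r = a * Sg al1 be1 ga1 h t r + b * Sg al1 be1 ga1 h t (S r).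
Proof.
  intros G1 G2 HM HI. unfold Sg. pose proof (good_K _ _ _ _ G1) as HK.
  rewrite <- (ES_lin _ _ a b M (3*B1) M (3*B1) t HK HK (It_cbnd _ _ _ _ _ _ r G1 HM) (It_cbnd _ _ _ _ _ _ (S r) G1 HM)).
  unfold ES. apply PSeries_ext. intro n. unfold ESa. rewrite (It_inter al1 be1 ga1); auto.
Qed.

Lemma sum_shift_id (u : nat -> R) n :
  sum_f_R0 (fun k => (INR (S n) - INR k) * u k) n + sum_f_R0 (fun k => INR (S k) * u (S k)) n
  = INR (S n) * sum_f_R0 u (S n).
Proof.
  assert (E1 : sum_f_R0 (fun k => INR k * u k) (S n) = sum_f_R0 (fun k => INR (S k) * u (S k)) n).
  { rewrite decomp_sum by lia. simpl pred. simpl INR at 1. ring. }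
  assert (E2 : sum_f_R0 (fun k => (INR (S n) - INR k) * u k) (S n) = sum_f_R0 (fun k => (INR (S n) - INR k) * u k) n).
  { rewrite tech5. ring. }
  rewrite <- E1, <- E2, <- plus_sum. rewrite scal_sum. apply sum_eq. intros. ring.
Qed.

Lemma Op_sum al be ga (w : nat -> R) (e : nat -> nat -> R) n x :
  Op al be ga (fun y => sum_f_R0 (fun k => w k * e k y) n) x = sum_f_R0 (fun k => w k * Op al be ga (e k) x) n.
Proof.
  induction n.
  - simpl. unfold Op. ring.
  - simpl. rewrite <- IHn. unfold Op. ring.
Qed.

Lemma It_nonneg al be ga k g x : (forall y, 0 <= al y /\ 0 <= be y /\ 0 <= ga y) -> (forall y, 0 <= g y) ->
  0 <= It al be ga k g x.
Proof.
  intros Hc Hg. revert x; induction k; intro x. apply Hg.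
  rewrite It_S. unfold Op. destruct (Hc x) as (A & B & C).
  pose proof (IHk (S x)); pose proof (IHk (pred x)); pose proof (IHk x).
  apply Rplus_le_le_0_compat; [apply Rplus_le_le_0_compat|]; apply Rmult_le_pos; auto.
Qed.

Lemma It_cauchy al be ga B g n x :
  It al be ga n g x / INR (fact n) =
  sum_f_R0 (fun k => (-B) ^ k / INR (fact k) * (It al be (fun y => ga y + B) (n - k) g x / INR (fact (n - k)))) n.
Proof.
  revert x; induction n; intro x.
  - simpl. field.
  - set (ga' := fun y => ga y + B).
    set (a := fun k => (-B) ^ k / INR (fact k)).
    set (E := fun j => It al be ga' j g x).
    assert (IH : forall y, It al be ga n g y =
       sum_f_R0 (fun k => (INR (fact n) * a k / INR (fact (n - k))) * It al be ga' (n - k) g y) n).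
    { intro y. specialize (IHn y). apply (Rmult_eq_compat_l (INR (fact n))) in IHn.
      unfold Rdiv at 1 in IHn. rewrite <- Rmult_assoc, (Rmult_comm (INR (fact n))), Rmult_assoc, Rinv_r, Rmult_1_r in IHn
        by (apply Rgt_not_eq, fact_pos).
      rewrite IHn. rewrite scal_sum. apply sum_eq. intros i Hi. unfold a, ga'. field.
      split; apply Rgt_not_eq, fact_pos. }
    rewrite It_S.
    assert (HO : Op al be ga (It al be ga n g) x = Op al be ga' (It al be ga n g) x - B * It al be ga n g x).
    { unfold Op, ga'. ring. }
    rewrite HO. rewrite (Op_ext _ _ _ _ _ _ IH). rewrite Op_sum. rewrite (IH x).
    set (u := fun k => a k * (E (S n - k)%nat / INR (fact (S n - k)))).
    transitivity (sum_f_R0 u (S n)); [| reflexivity].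
    rewrite <- (Rmult_1_l (sum_f_R0 u (S n))).
    replace 1 with (INR (fact n) / INR (fact (S n)) * INR (S n)) by
      (rewrite fact_simpl, mult_INR; field; split; [apply Rgt_not_eq, fact_pos|apply not_0_INR; lia]).
    rewrite Rmult_assoc. rewrite <- sum_shift_id.
    assert (S1 : sum_f_R0 (fun k => INR (fact n) * a k / INR (fact (n - k)) * Op al be ga' (fun y => It al be ga' (n - k) g y) x) n
               = INR (fact n) * sum_f_R0 (fun k => (INR (S n) - INR k) * u k) n).
    { rewrite scal_sum. apply sum_eq. intros i Hi. unfold u, E.
      replace (S n - i)%nat with (S (n - i)) by lia. rewrite It_S. rewrite fact_simpl, mult_INR.
      replace (INR (S (n - i))) with (INR (S n) - INR i) by (rewrite !S_INR, minus_INR by lia; ring).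
      change (fun y => It al be ga' (n - i) g y) with (It al be ga' (n - i) g). field. split; [apply Rgt_not_eq, fact_pos|]. rewrite !S_INR. apply Rgt_not_eq. apply le_INR in Hi. lra. }
    assert (S2 : B * sum_f_R0 (fun k => INR (fact n) * a k / INR (fact (n - k)) * It al be ga' (n - k) g x) n
               + INR (fact n) * sum_f_R0 (fun k => INR (S k) * u (S k)) n = 0).
    { rewrite !scal_sum, <- plus_sum.
      rewrite (sum_eq _ (fun _ => 0)). rewrite sum_cte. ring.
      intros i Hi. unfold u, E, a.
      replace (S n - S i)%nat with (n - i)%nat by lia. rewrite (fact_simpl i), mult_INR. simpl pow.
      field. split; [apply Rgt_not_eq, fact_pos|]. split; [apply Rgt_not_eq, fact_pos|]. apply not_0_INR. lia. }
    rewrite S1.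
    replace (B * sum_f_R0 (fun k => INR (fact n) * a k / INR (fact (n - k)) * It al be ga' (n - k) g x) n)
      with (- (INR (fact n) * sum_f_R0 (fun k => INR (S k) * u (S k)) n)) by lra.
    field. apply Rgt_not_eq, fact_pos.
Qed.

Lemma good_shift al be ga B : good al be ga B -> good al be (fun y => ga y + B) (2 * B).
Proof. intros [HB H]. split. lra. intro x. destruct (H x) as (A & C & D). lra. Qed.

Lemma Sg_pos al be ga B g M t x : good al be ga B -> (forall y, Rabs (g y) <= M) -> (forall y, 0 <= g y) ->
  0 <= t -> 0 <= Sg al be ga g t x.
Proof.
  intros Hg HM Hp Ht. pose proof (good_shift _ _ _ _ Hg) as Hg'. pose proof Hg as [HB _].
  set (ga' := fun y => ga y + B) in *.
  set (a := fun k => (-B) ^ k / INR (fact k)).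
  set (bb := ESa (fun k => It al be ga' k g x)).
  unfold Sg, ES. rewrite (PSeries_ext _ (PS_mult a bb)).
  2: { intro n. unfold ESa at 1. rewrite (It_cauchy al be ga B). unfold PS_mult. apply sum_eq.
       intros i Hi. unfold a, bb, ESa. reflexivity. }
  assert (Ha : cbnd (fun k => (-B) ^ k) 1 B).
  { intro k. rewrite <- RPow_abs. rewrite Rabs_Ropp, Rabs_right by lra. lra. }
  rewrite PSeries_mult.
  - apply Rmult_le_pos.
    + assert (PSeries a t = PSeries (fun n => / INR (fact n)) (- B * t)).
      { unfold PSeries. apply Series_ext. intro n. unfold a. rewrite Rpow_mult_distr. unfold Rdiv. ring. }
      rewrite H, <- exp_Reals. left; apply exp_pos.
    + apply (ES_ge0 _ M (3 * (2 * B))); auto. apply good_K with al be ga'; auto.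
      apply It_cbnd; auto. intro k. apply It_nonneg; auto.
      intro y. unfold ga'. destruct Hg as [_ Hg]. destruct (Hg y) as (A1 & A2 & A3). lra.
  - apply (ES_rad _ 1 B); auto.
  - apply (ES_rad _ M (3 * (2 * B))). apply good_K with al be ga'; auto. apply It_cbnd; auto.
Qed.

Lemma Op_bnd al be ga B h M x : good al be ga B -> (forall y, Rabs (h y) <= M) ->
  Rabs (Op al be ga h x) <= 3 * B * M.
Proof.
  intros [HB Hg] HM. unfold Op. destruct (Hg x) as (H1 & H2 & H3).
  pose proof (HM (S x)); pose proof (HM (pred x)); pose proof (HM x).
  eapply Rle_trans. apply Rabs_triang. eapply Rle_trans. apply Rplus_le_compat_r. apply Rabs_triang.
  rewrite !Rabs_mult.
  assert (Rabs (al x) <= B) by (rewrite Rabs_right; lra).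
  assert (Rabs (be x) <= B) by (rewrite Rabs_right; lra).
  assert (Rabs (ga x) <= B) by (apply Rabs_le; lra).
  assert (Rabs (al x) * Rabs (h (S x)) <= B * M) by (apply Rmult_le_compat; auto; apply Rabs_pos).
  assert (Rabs (be x) * Rabs (h (pred x)) <= B * M) by (apply Rmult_le_compat; auto; apply Rabs_pos).
  assert (Rabs (ga x) * Rabs (h x) <= B * M) by (apply Rmult_le_compat; auto; apply Rabs_pos).
  lra.
Qed.

Definition alD (q : R) (x : nat) : R := match x with O => 0 | S _ => 2 * q end.
Definition gaD (q : R) (x : nat) : R := match x with O => 0 | S _ => - (4 * q) end.

Lemma goodD q : 0 < q -> good (alD q) (alD q) (gaD q) (6 * q).
Proof. intro. split. lra. intro x. destruct x; simpl; lra. Qed.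

Lemma q0_zero q x y : (x = 0%nat \/ (y <> S x /\ S y <> x)) -> q0 q x y = 0.
Proof.
  intro H. unfold q0. destruct H as [H|[H1 H2]].
  - subst. reflexivity.
  - destruct (y =? S x)%nat eqn:E1. apply Nat.eqb_eq in E1; lia.
    destruct (S y =? x)%nat eqn:E2. apply Nat.eqb_eq in E2; lia.
    destruct (0 <? x)%nat; reflexivity.
Qed.

Lemma q0_up q x : (0 < x)%nat -> q0 q x (S x) = 2 * q.
Proof. intro. unfold q0. apply Nat.ltb_lt in H. rewrite H. rewrite Nat.eqb_refl. reflexivity. Qed.

Lemma q0_down q x : q0 q (S x) x = 2 * q.
Proof. unfold q0. simpl. rewrite Nat.eqb_refl. rewrite Bool.orb_true_r. reflexivity. Qed.

Lemma Lap_eq q g x : sum_f_R0 (fun y => q0 q x y * (g y - g x)) (S x) = Op (alD q) (alD q) (gaD q) g x.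
Proof.
  destruct x as [|m].
  - simpl. rewrite !q0_zero by auto. unfold Op; simpl. ring.
  - rewrite !tech5. rewrite q0_up by lia. rewrite (q0_zero q (S m) (S m)) by (right; lia).
    unfold Op; simpl alD; simpl gaD; simpl pred.
    destruct m as [|m'].
    + simpl. rewrite q0_down. ring.
    + rewrite tech5. rewrite q0_down.
      rewrite (sum_eq _ (fun _ => 0)). rewrite sum_cte. ring.
      intros i Hi. rewrite q0_zero by (right; lia). ring.
Qed.

Lemma LapS_eq q N g x : LapS q N g x = if inS N x then Op (alD q) (alD q) (gaD q) g x else 0.
Proof. unfold LapS. destruct (inS N x); auto. apply Lap_eq. Qed.

Lemma loc q N f k j : (j + k <= N)%nat ->
  Nat.iter k (LapS q N) (restrict N f) j = It (alD q) (alD q) (gaD q) k f j.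
Proof.
  revert j; induction k; intros j Hj.
  - simpl. unfold restrict, inS. replace (j <=? N)%nat with true; auto. symmetry; apply Nat.leb_le; lia.
  - simpl Nat.iter. rewrite LapS_eq. unfold inS. replace (j <=? N)%nat with true by (symmetry; apply Nat.leb_le; lia).
    rewrite It_S. unfold Op. rewrite !IHk by (simpl; lia). reflexivity.
Qed.

Lemma trunc_bnd q N f k x : 0 < q -> (forall y, Rabs (f y) <= 1) ->
  Rabs (Nat.iter k (LapS q N) (restrict N f) x) <= 1 * (3 * (6 * q)) ^ k.
Proof.
  intros Hq Hf. revert x; induction k; intro x.
  - simpl. unfold restrict. destruct (inS N x). rewrite Rmult_1_r; auto. rewrite Rabs_R0; lra.
  - simpl Nat.iter. rewrite LapS_eq. destruct (inS N x).
    + eapply Rle_trans. apply (Op_bnd _ _ _ (6 * q) _ (1 * (3 * (6 * q)) ^ k)); auto. apply goodD; auto.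
      simpl pow. lra.
    + rewrite Rabs_R0. apply Rmult_le_pos. lra. apply pow_le; lra.
Qed.

Lemma Lim_eq (u : nat -> R) l : Un_cv u l -> Defs.Lim u = l.
Proof.
  intro H. unfold Defs.Lim.
  pose proof (epsilon_spec (inhabits 0) (fun l => Un_cv u l) (ex_intro _ l H)) as H2.
  eapply UL_sequence; eauto.
Qed.

Lemma PS_eq q N t f x : 0 < q -> (forall y, Rabs (f y) <= 1) ->
  Defs.PS q N t f x = ES (fun k => Nat.iter k (LapS q N) (restrict N f) x) t.
Proof.
  intros Hq Hf. unfold Defs.PS. apply Lim_eq.
  assert (HK : 0 <= 3 * (6 * q)) by lra.
  pose proof (ES_is _ 1 _ t HK (fun k => trunc_bnd q N f k x Hq Hf)) as H.
  apply is_series_Reals in H. exact H.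
Qed.

Definition Sd q g t x := Sg (alD q) (alD q) (gaD q) g t x.

Lemma Pt_eq q t f x : 0 < q -> (forall y, Rabs (f y) <= 1) -> Defs.Pt q t f x = Sd q f t x.
Proof.
  intros Hq Hf. unfold Defs.Pt. apply Lim_eq.
  assert (HK : 0 <= 3 * (6 * q)) by lra.
  assert (Hy : 0 <= 3 * (6 * q) * Rabs t) by (apply Rmult_le_pos; auto; apply Rabs_pos).
  intros eps Heps.
  destruct (tail_cv _ Hy (eps / 4)) as [N0 HN0]. lra.
  exists (N0 + x)%nat. intros N HN. rewrite PS_eq by auto. unfold Rdist, R_dist, Sd, Sg.
  replace (ES (fun k => Nat.iter k (LapS q N) (restrict N f) x) t - ES (fun k => It (alD q) (alD q) (gaD q) k f x) t)
    with (ES (fun k => 1 * Nat.iter k (LapS q N) (restrict N f) x + (-1) * It (alD q) (alD q) (gaD q) k f x) t).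
  2: { rewrite (ES_lin _ _ 1 (-1) 1 (3 * (6 * q)) 1 (3 * (6 * q))); auto. ring.
       intro k; apply trunc_bnd; auto. apply It_cbnd; auto. apply goodD; auto. }
  eapply Rle_lt_trans. apply (ES_tail _ (N - x) 2 (3 * (6 * q))); auto. lra.
  - intros k Hk. rewrite loc by lia. ring.
  - intro k. eapply Rle_trans. apply Rabs_triang. rewrite !Rabs_mult. rewrite Rabs_R1. replace (Rabs (-1)) with 1 by (rewrite Rabs_left; lra).
    pose proof (trunc_bnd q N f k x Hq Hf). pose proof (It_bnd _ _ _ _ f 1 k x (goodD q Hq) Hf). lra.
  - specialize (HN0 (N - x)%nat ltac:(lia)). unfold R_dist in HN0. rewrite Rminus_0_r in HN0.
    pose proof (Rle_abs (tail (N - x) (3 * (6 * q) * Rabs t))). lra.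
Qed.

Lemma It_ext al be ga k g1 g2 x : (forall y, g1 y = g2 y) -> It al be ga k g1 x = It al be ga k g2 x.
Proof.
  intro H. revert x; induction k; intro x. apply H.
  rewrite !It_S. apply Op_ext. auto.
Qed.

Lemma Sg_ext al be ga g1 g2 t x : (forall y, g1 y = g2 y) -> Sg al be ga g1 t x = Sg al be ga g2 t x.
Proof. intro H. unfold Sg, ES. apply PSeries_ext. intro n. unfold ESa. rewrite (It_ext _ _ _ _ g1 g2); auto. Qed.

Lemma ES_zero c t : (forall k, c k = 0) -> ES c t = 0.
Proof. intro H. unfold ES. rewrite (PSeries_ext _ (fun _ => 0)). apply PSeries_const_0.
  intro n. unfold ESa. rewrite H. unfold Rdiv; ring. Qed.

Lemma ES_decr c M K t : 0 <= K -> cbnd c M K ->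
  ES c t = c 0%nat + t * ES (fun k => c (S k) / INR (S k)) t.
Proof.
  intros HK Hc. unfold ES. rewrite PSeries_decr_1 by (apply (ES_ex c M K); auto).
  f_equal. unfold ESa. simpl. field. f_equal. apply PSeries_ext. intro n. unfold PS_decr_1, ESa.
  rewrite fact_simpl, mult_INR. field. repeat split; try (apply Rgt_not_eq, fact_pos); try (apply not_0_INR; lia).
Qed.

Lemma incr_deriv (f f' : R -> R) a b : a <= b ->
  (forall x, a <= x <= b -> is_derive f x (f' x)) -> (forall x, a <= x <= b -> 0 <= f' x) -> f a <= f b.
Proof.
  intros Hab Hd Hp.
  destruct (MVT_gen f a b f') as [c [Hc E]].
  - intros x Hx. rewrite Rmin_left, Rmax_right in Hx by lra. apply Hd; lra.
  - intros x Hx. rewrite Rmin_left, Rmax_right in Hx by lra. apply continuity_pt_filterlim.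
    apply (@ex_derive_continuous R_AbsRing R_NormedModule). exists (f' x). apply Hd; lra.
  - rewrite Rmin_left, Rmax_right in Hc by lra.
    assert (0 <= f' c * (b - a)) by (apply Rmult_le_pos; [apply Hp; lra|lra]). lra.
Qed.

Definition f1 (m : nat) : R := if (0 <? m)%nat then 1 else 0.
Definition d0 (m : nat) : R := match m with O => 1 | S _ => 0 end.
Definition alC (q : R) (x : nat) : R := 2 * q.
Definition ga1 (q : R) (x : nat) : R := match x with O => - (2 * q) | S _ => - (4 * q) end.
Definition ga2 (q : R) (x : nat) : R := - (4 * q).
Definition al3 (q : R) (x : nat) : R := match x with O => 4 * q | S _ => 2 * q end.
Definition ga4 (q : R) (x : nat) : R := match x with O => - (6 * q) | S _ => - (4 * q) end.

Lemma good1 q : 0 < q -> good (alC q) (alD q) (ga1 q) (6 * q).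
Proof. intro. split. lra. intro x. unfold alC. destruct x; simpl; lra. Qed.
Lemma good2 q : 0 < q -> good (alC q) (alD q) (ga2 q) (6 * q).
Proof. intro. split. lra. intro x. unfold alC, ga2. destruct x; simpl; lra. Qed.
Lemma good3 q : 0 < q -> good (al3 q) (alD q) (ga2 q) (6 * q).
Proof. intro. split. lra. intro x. unfold ga2. destruct x; simpl; lra. Qed.
Lemma good4 q : 0 < q -> good (alC q) (alD q) (ga4 q) (6 * q).
Proof. intro. split. lra. intro x. unfold alC. destruct x; simpl; lra. Qed.

Lemma f1_bnd y : Rabs (f1 y) <= 1.
Proof. unfold f1. destruct (0 <? y)%nat. rewrite Rabs_R1; lra. rewrite Rabs_R0; lra. Qed.
Lemma d0_bnd y : Rabs (d0 y) <= 1.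
Proof. unfold d0. destruct y. rewrite Rabs_R1; lra. rewrite Rabs_R0; lra. Qed.
Lemma d0_pos y : 0 <= d0 y.
Proof. unfold d0. destruct y; lra. Qed.
Lemma f1_pos y : 0 <= f1 y.
Proof. unfold f1. destruct (0 <? y)%nat; lra. Qed.

Definition phiE q t r := Sg (alD q) (alD q) (gaD q) f1 t r.
Definition gE q t r := Sg (alC q) (alD q) (ga1 q) d0 t r.
Definition hE q t r := Sg (alC q) (alD q) (ga2 q) d0 t r.
Definition pE q t r := Sg (al3 q) (alD q) (ga2 q) d0 t r.
Definition VE q t r := Sg (alC q) (alD q) (ga4 q) d0 t r.
Definition wE q t r := Sg (alD q) (alD q) (gaD q) d0 t r.

Lemma R1 q t r : 0 < q -> gE q t r = phiE q t (S r) - phiE q t r.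
Proof.
  intro Hq. unfold gE, phiE.
  rewrite (Sg_ext _ _ _ d0 (fun y => -1 * f1 y + 1 * f1 (S y))).
  - rewrite (Sg_inter (alD q) (alD q) (gaD q) _ _ _ (-1) 1 (6*q) (6*q) f1 1).
    ring. apply goodD; auto. apply good1; auto. apply f1_bnd.
    intros h x. destruct x as [|[|x]]; unfold Op, alC, alD, gaD, ga1; simpl; ring.
  - intro y. unfold d0, f1. destruct y; simpl; ring.
Qed.

Lemma R2 q t r : 0 < q -> gE q t (S r) - gE q t r = - hE q t r.
Proof.
  intro Hq. unfold gE, hE.
  transitivity (Sg (alC q) (alD q) (ga2 q) (fun y => -1 * d0 y + 1 * d0 (S y)) t r).
  - rewrite (Sg_inter (alC q) (alD q) (ga1 q) _ _ _ (-1) 1 (6*q) (6*q) d0 1).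
    ring. apply good1; auto. apply good2; auto. apply d0_bnd.
    intros h x. destruct x as [|[|x]]; unfold Op, alC, alD, ga1, ga2; simpl; ring.
  - rewrite (Sg_ext _ _ _ _ (fun y => -1 * d0 y + 0 * d0 y)).
    rewrite (Sg_lin _ _ _ (6*q) d0 d0 1 1). ring. apply good2; auto. apply d0_bnd. apply d0_bnd.
    intro y. unfold d0. destruct y; simpl; ring.
Qed.

Lemma R3 q t r : 0 < q -> gE q t r = pE q t r + pE q t (S r).
Proof.
  intro Hq. unfold gE, pE.
  rewrite (Sg_ext _ _ _ d0 (fun y => 1 * d0 y + 1 * d0 (S y))).
  - rewrite (Sg_inter (al3 q) (alD q) (ga2 q) _ _ _ 1 1 (6*q) (6*q) d0 1).
    ring. apply good3; auto. apply good1; auto. apply d0_bnd.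
    intros h x. destruct x as [|[|x]]; unfold Op, alC, alD, al3, ga1, ga2; simpl; ring.
  - intro y. unfold d0. destruct y; simpl; ring.
Qed.

Lemma R4 q t r : 0 < q -> VE q t r = pE q t r - pE q t (S r).
Proof.
  intro Hq. unfold VE, pE.
  rewrite (Sg_ext _ _ _ d0 (fun y => 1 * d0 y + (-1) * d0 (S y))).
  - rewrite (Sg_inter (al3 q) (alD q) (ga2 q) _ _ _ 1 (-1) (6*q) (6*q) d0 1).
    ring. apply good3; auto. apply good4; auto. apply d0_bnd.
    intros h x. destruct x as [|[|x]]; unfold Op, alC, alD, al3, ga4, ga2; simpl; ring.
  - intro y. unfold d0. destruct y; simpl; ring.
Qed.

Lemma R5 q t : phiE q t 0 = 0.
Proof.
  unfold phiE, Sg. apply ES_zero. intro k. destruct k. reflexivity.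
  rewrite It_S. unfold Op, alD, gaD. simpl. ring.
Qed.

Lemma R6 q t r : 0 < q -> wE q t r = 1 - phiE q t r.
Proof.
  intro Hq. unfold wE, phiE.
  rewrite (Sg_ext _ _ _ d0 (fun y => 1 * (fun _ => 1) y + (-1) * f1 y)).
  - rewrite (Sg_lin _ _ _ (6*q) (fun _ => 1) f1 1 1); try apply goodD; auto; try apply f1_bnd.
    2: { intro; rewrite Rabs_R1; lra. }
    unfold Sg. rewrite (ES_decr _ 1 (3*(6*q))); try lra.
    2: { apply It_cbnd. apply goodD; auto. intro; rewrite Rabs_R1; lra. }
    rewrite (ES_zero _ t). simpl. ring.
    intro k. rewrite It_S.
    assert (forall k y, It (alD q) (alD q) (gaD q) (S k) (fun _ => 1) y = 0).
    { induction k0; intro y. unfold It; simpl. unfold Op, alD, gaD. destruct y; ring.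
      rewrite It_S. unfold Op. rewrite !IHk0. ring. }
    rewrite <- It_S, H. unfold Rdiv. ring.
  - intro y. unfold d0, f1. destruct y; simpl; ring.
Qed.

Lemma bessel_coef q : forall k i,
  INR (S i) * It (al3 q) (alD q) (ga2 q) (S k) d0 (S i) =
  2 * q * INR (S k) * (It (al3 q) (alD q) (ga2 q) k d0 i - It (al3 q) (alD q) (ga2 q) k d0 (S (S i))).
Proof.
  induction k; intro i.
  - rewrite It_S. unfold It; simpl Nat.iter. unfold Op, al3, alD, ga2, d0. destruct i; simpl; ring.
  - set (X := It (al3 q) (alD q) (ga2 q) (S k) d0).
    set (Y := It (al3 q) (alD q) (ga2 q) k d0).
    assert (HX : forall y, X y = Op (al3 q) (alD q) (ga2 q) Y y) by reflexivity.
    assert (E : INR (S i) * It (al3 q) (alD q) (ga2 q) (S (S k)) d0 (S i) =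
      2 * q * ((INR (S (S i)) * X (S (S i))) - X (S (S i)) + INR i * X i + X i - 2 * (INR (S i) * X (S i)))).
    { rewrite It_S. fold X. unfold Op, al3, alD, ga2. simpl pred. rewrite !S_INR. ring. }
    rewrite E. unfold X. rewrite (IHk (S i)), (IHk i). fold X. fold Y.
    destruct i as [|i'].
    + change (INR 0) with 0. rewrite Rmult_0_l. unfold X. rewrite !It_S. fold Y.
      unfold Op, al3, alD, ga2. simpl pred. rewrite !S_INR. ring.
    + unfold X. rewrite (IHk i'). rewrite !It_S. fold Y. unfold Op, al3, alD, ga2. simpl pred.
      rewrite !S_INR. ring.
Qed.

Lemma ES_ext c1 c2 t : (forall k, c1 k = c2 k) -> ES c1 t = ES c2 t.
Proof. intro H. unfold ES. apply PSeries_ext. intro n. unfold ESa. rewrite H. reflexivity. Qed.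

Lemma bessel q t : 0 < q -> pE q t 1 = 2 * q * t * (pE q t 0 - pE q t 2).
Proof.
  intro Hq. unfold pE, Sg.
  assert (HK : 0 <= 3 * (6 * q)) by lra.
  assert (G : good (al3 q) (alD q) (ga2 q) (6 * q)) by (apply good3; auto).
  rewrite (ES_decr _ 1 (3 * (6 * q))); auto.
  2: { apply It_cbnd; auto. apply d0_bnd. }
  replace (It (al3 q) (alD q) (ga2 q) 0 d0 1) with 0 by reflexivity.
  rewrite (ES_ext _ (fun k => (2 * q) * It (al3 q) (alD q) (ga2 q) k d0 0 + (- (2 * q)) * It (al3 q) (alD q) (ga2 q) k d0 2)).
  - rewrite (ES_lin _ _ _ _ 1 (3 * (6 * q)) 1 (3 * (6 * q))); auto; try (apply It_cbnd; auto; apply d0_bnd). ring.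
  - intro k. pose proof (bessel_coef q k 0) as H. simpl INR in H at 1. rewrite Rmult_1_l in H.
    rewrite H. field. apply not_0_INR. lia.
Qed.

Lemma is_derive_val (f : R -> R) x l l' : is_derive f x l -> l = l' -> is_derive f x l'.
Proof. intros H E. subst. exact H. Qed.

Lemma gE_pos q t r : 0 < q -> 0 <= t -> 0 <= gE q t r.
Proof. intros. apply (Sg_pos _ _ _ (6*q) _ 1); auto. apply good1; auto. apply d0_bnd. apply d0_pos. Qed.
Lemma hE_pos q t r : 0 < q -> 0 <= t -> 0 <= hE q t r.
Proof. intros. apply (Sg_pos _ _ _ (6*q) _ 1); auto. apply good2; auto. apply d0_bnd. apply d0_pos. Qed.
Lemma VE_pos q t r : 0 < q -> 0 <= t -> 0 <= VE q t r.
Proof. intros. apply (Sg_pos _ _ _ (6*q) _ 1); auto. apply good4; auto. apply d0_bnd. apply d0_pos. Qed.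
Lemma wE_pos q t r : 0 < q -> 0 <= t -> 0 <= wE q t r.
Proof. intros. apply (Sg_pos _ _ _ (6*q) _ 1); auto. apply goodD; auto. apply d0_bnd. apply d0_pos. Qed.
Lemma phiE_pos q t r : 0 < q -> 0 <= t -> 0 <= phiE q t r.
Proof. intros. apply (Sg_pos _ _ _ (6*q) _ 1); auto. apply goodD; auto. apply f1_bnd. apply f1_pos. Qed.

Lemma D_phi q t r : 0 < q -> is_derive (fun s => phiE q s r) t (Op (alD q) (alD q) (gaD q) (phiE q t) r).
Proof. intro. apply (Sg_derive _ _ _ (6*q) _ 1). apply goodD; auto. apply f1_bnd. Qed.

Lemma D_w q t r : 0 < q -> is_derive (fun s => wE q s r) t (Op (alD q) (alD q) (gaD q) (wE q t) r).
Proof. intro. apply (Sg_derive _ _ _ (6*q) _ 1). apply goodD; auto. apply d0_bnd. Qed.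

Lemma D_g0 q t : 0 < q -> is_derive (fun s => gE q s 0) t (2 * q * (gE q t 1 - gE q t 0)).
Proof.
  intro. eapply is_derive_val. apply (Sg_derive _ _ _ (6*q) _ 1). apply good1; auto. apply d0_bnd.
  unfold Op. change (alC q 0) with (2*q). change (alD q 0) with 0. change (ga1 q 0) with (-(2*q)). simpl pred. unfold gE. match goal with |- ?a = ?b => change (@eq R a b) end. ring.
Qed.

Lemma mono_X q t s : 0 < q -> 0 < t <= s -> sqrt t * gE q t 0 <= sqrt s * gE q s 0.
Proof.
  intros Hq Hts.
  apply (incr_deriv (fun u => sqrt u * gE q u 0)
           (fun u => / (2 * sqrt u) * gE q u 0 + sqrt u * (2 * q * (gE q u 1 - gE q u 0)))); try lra.
  - intros x Hx. eapply is_derive_val.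
    + apply (is_derive_mult (fun u => sqrt u) (fun u => gE q u 0)).
      * eapply is_derive_val. apply (is_derive_sqrt (fun u => u)). apply is_derive_id. simpl; lra.
        simpl. reflexivity.
      * apply D_g0; auto.
      * intros; apply Rmult_comm.
    + simpl. unfold one, plus, mult; simpl. field. apply Rgt_not_eq, sqrt_lt_R0; lra.
  - intros x Hx.
    assert (Hs : 0 < sqrt x) by (apply sqrt_lt_R0; lra).
    assert (E : / (2 * sqrt x) * gE q x 0 + sqrt x * (2 * q * (gE q x 1 - gE q x 0))
              = / (2 * sqrt x) * VE q x 0).
    { rewrite R4 by auto. rewrite !R3 by auto.
      pose proof (bessel q x Hq) as B.
      pose proof (sqrt_sqrt x ltac:(lra)) as SS.
      assert (E2 : sqrt x * (2 * q * (gE q x 1 - gE q x 0)) = / (2 * sqrt x) * (2 * (sqrt x * sqrt x) * (2 * q * (gE q x 1 - gE q x 0))))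
        by (field; lra).
      rewrite R3 in E2 by auto. rewrite R3 in E2 by auto.
      rewrite E2, SS. rewrite <- Rmult_plus_distr_l. f_equal. nra. }
    rewrite E. apply Rmult_le_pos. left; apply Rinv_0_lt_compat; lra. apply VE_pos; lra.
Qed.


Ltac toR := match goal with |- ?a = ?b => change (@eq R a b) end.

Definition FF q n t := sum_f_R0 (fun i => wE q t (S i)) n.
Definition GG q n t := sum_f_R0 (fun i => INR (S i) * wE q t (S i)) n.

Lemma w_phi q t r : 0 < q -> wE q t r = 1 - phiE q t r.
Proof. apply R6. Qed.

Lemma Dw_val q t r : 0 < q -> Op (alD q) (alD q) (gaD q) (wE q t) (S r)
   = 2 * q * (- gE q t (S r) + gE q t r).
Proof.
  intro Hq. unfold Op. change (alD q (S r)) with (2*q). change (gaD q (S r)) with (-(4*q)). simpl pred.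
  rewrite !w_phi, !R1 by auto. ring.
Qed.

Lemma D_FF q n t : 0 < q -> is_derive (FF q n) t (2 * q * (gE q t 0 - gE q t (S n))).
Proof.
  intro Hq. induction n.
  - unfold FF. simpl. eapply is_derive_val. apply D_w; auto. toR. rewrite Dw_val by auto. ring.
  - unfold FF. simpl. eapply is_derive_val.
    apply (is_derive_plus (fun s => sum_f_R0 (fun i => wE q s (S i)) n) (fun s => wE q s (S (S n)))).
    apply IHn. apply D_w; auto. toR. change (plus ?a ?b) with (a + b). rewrite Dw_val by auto. ring.
Qed.

Lemma D_GG q n t : 0 < q -> is_derive (GG q n) t (2 * q * (- INR (S n) * gE q t (S n) - wE q t (S n) + 1)).
Proof.
  intro Hq. induction n.
  - unfold GG. simpl. eapply is_derive_val.
    apply (is_derive_scal (fun s => wE q s 1) t 1). apply D_w; auto. toR.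
    rewrite Dw_val by auto. rewrite !w_phi, !R1 by auto. try rewrite R5. ring.
  - change (GG q (S n)) with (fun s => GG q n s + INR (S (S n)) * wE q s (S (S n))). eapply is_derive_val.
    apply (is_derive_plus (GG q n) (fun s => INR (S (S n)) * wE q s (S (S n)))).
    apply IHn. apply is_derive_scal. apply D_w; auto. toR. change (plus ?a ?b) with (a + b). rewrite Dw_val by auto.
    rewrite !w_phi, !R1 by auto. rewrite !S_INR. ring.
Qed.

Lemma wE_0 q r : wE q 0 (S r) = 0.
Proof. unfold wE, Sg. rewrite ES_0. reflexivity. Qed.

Lemma wE_le1 q t r : 0 < q -> 0 <= t -> wE q t r <= 1.
Proof. intros. rewrite w_phi by auto. pose proof (phiE_pos q t r H H0). lra. Qed.

Lemma GG_bound q n t : 0 < q -> 0 <= t -> GG q n t <= 2 * q * t.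
Proof.
  intros Hq Ht.
  assert (H0 : GG q n 0 = 0).
  { unfold GG. rewrite (sum_eq _ (fun _ => 0)). rewrite sum_cte. ring. intros. rewrite wE_0. ring. }
  assert (2 * q * 0 - GG q n 0 <= 2 * q * t - GG q n t).
  { apply (incr_deriv (fun u => 2 * q * u - GG q n u)
      (fun u => 2 * q - 2 * q * (- INR (S n) * gE q u (S n) - wE q u (S n) + 1))); auto.
    - intros x Hx. eapply is_derive_val. apply (is_derive_minus (fun u => 2 * q * u) (GG q n)).
      eapply is_derive_val. apply (is_derive_scal (fun u => u)). apply is_derive_id. toR. reflexivity.
      apply D_GG; auto. toR. change (minus ?a ?b) with (a - b). change (one) with 1. ring.
    - intros x Hx. pose proof (gE_pos q x (S n) Hq ltac:(lra)). pose proof (wE_pos q x (S n) Hq ltac:(lra)).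
      pose proof (pos_INR (S n)).
      assert (0 <= INR (S n) * gE q x (S n)) by (apply Rmult_le_pos; lra).
      nra. }
  lra.
Qed.

Lemma sum_le_cnt (u : nat -> R) n : (forall i, 0 <= u i <= 1) -> sum_f_R0 u n <= INR (S n).
Proof.
  intro Hu. induction n. simpl. destruct (Hu 0%nat); lra.
  rewrite tech5, (S_INR (S n)). destruct (Hu (S n)). lra.
Qed.

Lemma sq_bound (u : nat -> R) n : (forall i, 0 <= u i <= 1) ->
  (sum_f_R0 u n) ^ 2 <= sum_f_R0 (fun i => (2 * INR i + 1) * u i) n.
Proof.
  intro Hu. induction n.
  - simpl. destruct (Hu 0%nat). nra.
  - rewrite !tech5. destruct (Hu (S n)) as [A B].
    pose proof (sum_le_cnt u n Hu) as Hs.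
    assert (Hs0 : 0 <= sum_f_R0 u n).
    { apply cond_pos_sum. intro. apply Hu. }
    rewrite S_INR in *.
    assert (0 <= (INR n + 1 - sum_f_R0 u n) * u (S n)) by (apply Rmult_le_pos; lra).
    assert (0 <= u (S n) * (1 - u (S n))) by (apply Rmult_le_pos; lra).
    nra.
Qed.

Lemma FF_bound q n t : 0 < q -> 0 <= t -> FF q n t <= sqrt (4 * q * t).
Proof.
  intros Hq Ht.
  assert (H1 : (FF q n t) ^ 2 <= 4 * q * t).
  { eapply Rle_trans. apply (sq_bound (fun i => wE q t (S i))).
    intro i. split. apply wE_pos; auto. apply wE_le1; auto.
    pose proof (GG_bound q n t Hq Ht). unfold GG in H.
    assert (sum_f_R0 (fun i => (2 * INR i + 1) * wE q t (S i)) n <= 2 * sum_f_R0 (fun i => INR (S i) * wE q t (S i)) n).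
    { rewrite scal_sum. apply sum_Rle. intros i Hi. rewrite S_INR. pose proof (wE_pos q t (S i) Hq Ht). nra. }
    lra. }
  assert (H2 : 0 <= FF q n t) by (apply cond_pos_sum; intro; apply wE_pos; auto).
  rewrite <- (sqrt_pow2 (FF q n t)) by auto. apply sqrt_le_1_alt. lra.
Qed.

Lemma supp al be ga : forall k x, (k < x)%nat -> It al be ga k d0 x = 0.
Proof.
  induction k; intros x Hx.
  - unfold It; simpl. destruct x. lia. reflexivity.
  - rewrite It_S. unfold Op. rewrite !IHk by lia. ring.
Qed.

Lemma g_tail q n tau s : 0 < q -> 0 <= tau <= s -> gE q tau (S n) <= tail n (3 * (6 * q) * s).
Proof.
  intros Hq Hts. unfold gE, Sg.
  eapply Rle_trans. apply Rle_abs.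
  eapply Rle_trans. apply (ES_tail _ n 1 (3 * (6 * q))); try lra.
  - intros k Hk. apply supp. lia.
  - apply It_cbnd. apply good1; auto. apply d0_bnd.
  - rewrite Rmult_1_l. apply tail_mono. rewrite Rabs_right by lra. split.
    apply Rmult_le_pos; lra. apply Rmult_le_compat_l; lra.
Qed.

Lemma g_decr q t i : 0 < q -> 0 <= t -> gE q t i <= gE q t 0.
Proof.
  intros Hq Ht. induction i. lra.
  pose proof (R2 q t i Hq). pose proof (hE_pos q t i Hq Ht). lra.
Qed.

Lemma phi_le q t r : 0 < q -> 0 <= t -> phiE q t r <= INR r * gE q t 0.
Proof.
  intros Hq Ht. induction r.
  - rewrite R5. simpl. lra.
  - pose proof (R1 q t r Hq). pose proof (g_decr q t r Hq Ht). rewrite S_INR. lra.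
Qed.

Lemma lim_arg (Y v : R) : 0 < v -> (forall u, v < u -> Y * (u - v) <= u) -> Y <= 1.
Proof.
  intros Hv H. destruct (Rle_dec Y 1) as [|Hn]; auto. exfalso.
  assert (HY : 1 < Y) by lra.
  set (u := Y * v / (Y - 1) + 1).
  assert (Hu : v < u).
  { unfold u. assert (Y * v / (Y - 1) > v).
    { apply Rlt_gt. apply Rmult_lt_reg_r with (Y - 1). lra. unfold Rdiv. rewrite Rmult_assoc, Rinv_l by lra. nra. }
    lra. }
  specialize (H u Hu).
  assert ((Y - 1) * u <= Y * v) by lra.
  assert ((Y - 1) * u = Y * v + (Y - 1)) by (unfold u; field; lra).
  lra.
Qed.

Lemma sqrt_deriv x : 0 < x -> is_derive (fun u => sqrt u) x (/ (2 * sqrt x)).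
Proof.
  intro Hx. eapply is_derive_val. apply (is_derive_sqrt (fun u => u)). apply is_derive_id. simpl; lra.
  toR. change one with 1. simpl. field. apply Rgt_not_eq, sqrt_lt_R0; auto.
Qed.

Lemma key_ineq q t s n : 0 < q -> 0 < t <= s ->
  4 * q * (sqrt t * gE q t 0) * (sqrt s - sqrt t) <= sqrt (4 * q * s) + 2 * q * tail n (3 * (6 * q) * s) * (s - t).
Proof.
  intros Hq Hts.
  set (X := sqrt t * gE q t 0). set (e := tail n (3 * (6 * q) * s)).
  assert (HI : FF q n t - 4 * q * X * sqrt t + 2 * q * e * t <= FF q n s - 4 * q * X * sqrt s + 2 * q * e * s).
  { apply (incr_deriv (fun u => FF q n u - 4 * q * X * sqrt u + 2 * q * e * u)
       (fun u => 2 * q * (gE q u 0 - gE q u (S n)) - 4 * q * X * / (2 * sqrt u) + 2 * q * e)); try lra.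
    - intros x Hx. eapply is_derive_val.
      apply (is_derive_plus (fun u => FF q n u - 4 * q * X * sqrt u) (fun u => 2 * q * e * u)).
      apply (is_derive_minus (FF q n) (fun u => 4 * q * X * sqrt u)).
      apply D_FF; auto. apply is_derive_scal. apply sqrt_deriv; lra.
      apply is_derive_scal. apply is_derive_id.
      toR. change (plus ?a ?b) with (a + b). change (minus ?a ?b) with (a - b). change one with 1. ring.
    - intros x Hx.
      assert (Hs : 0 < sqrt x) by (apply sqrt_lt_R0; lra).
      pose proof (g_tail q n x s Hq ltac:(lra)) as Hg. fold e in Hg.
      pose proof (mono_X q t x Hq ltac:(lra)) as Hm. fold X in Hm.
      assert (X * / (2 * sqrt x) <= gE q x 0 / 2).
      { apply Rmult_le_reg_l with (2 * sqrt x). lra.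
        replace (2 * sqrt x * (X * / (2 * sqrt x))) with X by (field; lra). lra. }
      nra. }
  pose proof (FF_bound q n s Hq ltac:(lra)).
  assert (0 <= FF q n t) by (apply cond_pos_sum; intro; apply wE_pos; lra).
  lra.
Qed.

Lemma a_bound q t : 0 < q -> 0 < t -> gE q t 0 <= / (2 * sqrt (t * q)).
Proof.
  intros Hq Ht.
  set (X := sqrt t * gE q t 0).
  assert (Hst : 0 < sqrt t) by (apply sqrt_lt_R0; lra).
  assert (Hsq : 0 < sqrt q) by (apply sqrt_lt_R0; lra).
  assert (H1 : forall s, t < s -> 4 * q * X * (sqrt s - sqrt t) <= sqrt (4 * q * s)).
  { intros s Hs.
    destruct (Rle_dec (4 * q * X * (sqrt s - sqrt t)) (sqrt (4 * q * s))) as [|Hn]; auto. exfalso.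
    set (D := 4 * q * X * (sqrt s - sqrt t) - sqrt (4 * q * s)).
    assert (HD : 0 < D) by (unfold D; lra).
    assert (Hy : 0 <= 3 * (6 * q) * s) by (apply Rmult_le_pos; lra).
    destruct (tail_cv _ Hy (D / (2 * q * (s - t) + 1))) as [N HN].
    { apply Rdiv_lt_0_compat; auto. nra. }
    specialize (HN N (le_n N)). unfold R_dist in HN. rewrite Rminus_0_r in HN.
    pose proof (key_ineq q t s N Hq ltac:(lra)) as K. fold X in K.
    set (e := tail N (3 * (6 * q) * s)) in *.
    assert (Hc : 0 < 2 * q * (s - t) + 1) by nra.
    assert (He : 2 * q * (s - t) * e < D).
    { pose proof (Rle_abs e).
      apply Rle_lt_trans with (2 * q * (s - t) * Rabs e). apply Rmult_le_compat_l; nra.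
      apply Rmult_lt_compat_l with (r := 2 * q * (s - t) + 1) in HN; auto.
      replace ((2 * q * (s - t) + 1) * (D / (2 * q * (s - t) + 1))) with D in HN by (field; lra).
      pose proof (Rabs_pos e). nra. }
    unfold D in He. lra. }
  assert (H2 : 2 * sqrt q * X <= 1).
  { apply (lim_arg _ (sqrt t)); auto. intros u Hu.
    assert (Hu0 : 0 < u) by lra.
    specialize (H1 (u * u)).
    assert (t < u * u).
    { rewrite <- (sqrt_sqrt t) by lra. nra. }
    specialize (H1 H). rewrite sqrt_square in H1 by lra.
    rewrite !sqrt_mult in H1 by nra.
    replace (sqrt 4) with 2 in H1 by (rewrite <- (sqrt_square 2) by lra; f_equal; ring).
    rewrite sqrt_sqrt in H1 by lra.
    assert (SQ : sqrt q * sqrt q = q) by (apply sqrt_sqrt; lra).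
    apply Rmult_le_reg_l with (2 * sqrt q). lra.
    replace (2 * sqrt q * (2 * sqrt q * X * (u - sqrt t))) with (4 * (sqrt q * sqrt q) * X * (u - sqrt t)) by ring.
    rewrite SQ. lra. }
  rewrite sqrt_mult by lra. unfold X in H2.
  apply Rmult_le_reg_l with (2 * sqrt q * sqrt t). nra.
  replace (2 * sqrt q * sqrt t * / (2 * (sqrt t * sqrt q))) with 1 by (field; lra). lra.
Qed.

Lemma phi_eq q t r : 0 < q -> phi q t r = phiE q t r.
Proof. intro Hq. unfold phi. rewrite Pt_eq; auto. apply f1_bnd. Qed.

Theorem mainTheorem6 (qmin : R) (hq : 0 < qmin) :
  (forall (r : nat) (t : R), (1 <= r)%nat -> 0 < t ->
     derivable_pt_lim (fun s => phi qmin s r) t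
       (2 * qmin * (phi qmin t (S r) + phi qmin t (r - 1) - 2 * phi qmin t r))
     /\ 2 * qmin * (phi qmin t (S r) + phi qmin t (r - 1) - 2 * phi qmin t r) <= 0)
  /\ (forall (t : R) (x y : nat), 0 <= t -> (x <= y)%nat -> phi qmin t x <= phi qmin t y)
  /\ (forall (r : nat) (t : R), (1 <= r)%nat -> 0 < t ->
        phi qmin t r <= INR r / (2 * sqrt (t * qmin))).
Proof.
  split; [|split].
  - intros r t Hr Ht. destruct r as [|r']. lia.
    replace (S r' - 1)%nat with r' by lia.
    rewrite !phi_eq by auto. split.
    + apply is_derive_Reals.
      apply (is_derive_ext (fun s => phiE qmin s (S r'))). intro s. rewrite phi_eq; auto.
      eapply is_derive_val. apply D_phi; auto. toR.
      unfold Op. change (alD qmin (S r')) with (2 * qmin). change (gaD qmin (S r')) with (- (4 * qmin)).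
      simpl pred. ring.
    + pose proof (R1 qmin t (S r') hq). pose proof (R1 qmin t r' hq). pose proof (R2 qmin t r' hq).
      pose proof (hE_pos qmin t r' hq ltac:(lra)). nra.
  - intros t x y Ht Hxy. rewrite !phi_eq by auto. induction Hxy. lra.
    pose proof (R1 qmin t m hq). pose proof (gE_pos qmin t m hq Ht). lra.
  - intros r t Hr Ht. rewrite phi_eq by auto.
    eapply Rle_trans. apply phi_le; auto; lra.
    unfold Rdiv. apply Rmult_le_compat_l. apply pos_INR. apply a_bound; auto.
Qed.
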